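(* Let $p,q,r$ be pairwise distinct primes with $p<q$ and $p<r$, and let $n$ be an integer with $0\le n<pqr$. For a finite sequence $(t_1,\dots,t_l)$ and $d\in\{0,1,2\}$ let $N_d(t_1,\dots,t_l)$ be the number of indices $i$ with $t_i=d$. Then $$a_{pqr}(n)=\sum_{k=n-p+1}^{n}\big(N_0(F_k,F_{k-q-r})-N_0(F_{k-q},F_{k-r})\big)=\sum_{k=n-p+1}^{n}\big(N_2(F_k,F_{k-q-r})-N_2(F_{k-q},F_{k-r})\big)$$ $$=\frac12\sum_{k=n-p+1}^{n}\big(N_1(F_{k-q},F_{k-r})-N_1(F_k,F_{k-q-r})\big).$$
   Context: $\Phi_{pqr}(x)=\prod_{0<k<pqr,\ \gcd(k,pqr)=1}(x-\zeta^k)$, $\zeta$ a primitive $pqr$-th root of unity, with coefficients $a_{pqr}(n)$ (zero outside $[0,\deg\Phi_{pqr}]$). For each integer $k$, let $a_k,b_k,c_k$ be the unique integers with $0\le a_k<p$, $0\le b_k<q$, $0\le c_k<r$ and $k\equiv a_kqr+b_krp+c_kpq \pmod{pqr}$, and define $F_k=\frac{a_k}{p}+\frac{b_k}{q}+\frac{c_k}{r}-\frac{k}{pqr}$. *)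

(* Defs.v *)
From HB Require Import structures.
From mathcomp Require Import all_boot all_order all_algebra all_field.
Set Implicit Arguments. Unset Strict Implicit. Unset Printing Implicit Defensive.
Import Order.TTheory GRing.Theory Num.Theory.
Local Open Scope ring_scope.

Definition acoef (m n : nat) : int := ('Phi_m)`_n.

(* (a_k, b_k, c_k): the (unique, for pairwise distinct primes) triple with
   0 <= a_k < p, 0 <= b_k < q, 0 <= c_k < r and
   k = a_k qr + b_k rp + c_k pq  (mod pqr). *)
Definition abc (p q r : nat) (k : int) : nat * nat * nat :=
  match [pick t : 'I_p * 'I_q * 'I_r |
          (k == ((t.1.1 * (q * r) + t.1.2 * (r * p) + t.2 * (p * q))%N)%:Z
              %[mod ((p * q * r)%N)%:Z])%Z] with
  | Some t => (nat_of_ord t.1.1, nat_of_ord t.1.2, nat_of_ord t.2)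
  | None => (0%N, 0%N, 0%N)
  end.

Definition Fk (p q r : nat) (k : int) : rat :=
  let t := abc p q r k in
  (t.1.1)%:R / p%:R + (t.1.2)%:R / q%:R + (t.2)%:R / r%:R
  - k%:~R / ((p * q * r)%N)%:R.

Definition Ncount (d : nat) (s : seq rat) : nat := count (fun x => x == d%:R) s.

(* Main.v *)
Set Warnings "-notation-overridden,-ambiguous-paths".
Require Import Defs.
From HB Require Import structures.
From mathcomp Require Import all_boot all_order all_algebra all_field.
Import Order.TTheory GRing.Theory Num.Theory.
Local Open Scope ring_scope.
Set Warnings "-notation-overridden,-ambiguous-paths".
Set Implicit Arguments. Unset Strict Implicit.

Lemma divisors_split n l : prime l -> ~~ (l %| n)%N -> (0 < n)%N ->
  perm_eq (divisors (n * l)) (divisors n ++ map (muln l) (divisors n)).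
Proof.
move=> pl ndv n0; have l0 := prime_gt0 pl.
apply: uniq_perm; first exact: divisors_uniq.
- have inj : injective (muln l) by move=> x y /eqP; rewrite eqn_pmul2l // => /eqP.
  rewrite cat_uniq divisors_uniq (map_inj_uniq inj) ?divisors_uniq ?andbT //=.
  apply/hasPn => x /mapP[d dd ->]; rewrite -dvdn_divisors //.
  apply: contra ndv => H; apply: dvdn_trans H; exact: dvdn_mulr.
move=> d; rewrite mem_cat -!dvdn_divisors ?muln_gt0 ?n0 //.
apply/idP/idP.
- move=> H; case ld: (l %| d)%N.
  + apply/orP; right; move: H; case/dvdnP: ld => d' -> H; apply/mapP; exists d'.
      by rewrite -dvdn_divisors // -(@dvdn_pmul2l l) // (mulnC l n) mulnC.
    by rewrite mulnC.
  + apply/orP; left; move: H; rewrite Gauss_dvdl // coprime_sym prime_coprime //.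
    by rewrite ld.
- case/orP => [H|/mapP[d' dd ->]]; first exact: dvdn_mulr.
  by rewrite (mulnC n l) dvdn_pmul2l // dvdn_divisors.
Qed.

Lemma prod_split (R : comNzRingType) (f : nat -> R) n l : prime l -> ~~ (l %| n)%N -> (0 < n)%N ->
  \prod_(d <- divisors (n * l)) f d = (\prod_(d <- divisors n) f d) * \prod_(d <- divisors n) f (l * d)%N.
Proof.
move=> pl ndv n0; rewrite (perm_big _ (divisors_split pl ndv n0)) big_cat big_map //.
Qed.

Lemma divisors1 : divisors 1 = [:: 1%N].
Proof. by []. Qed.

Lemma prod_div1 (R : comNzRingType) (f : nat -> R) l : prime l ->
  \prod_(d <- divisors l) f d = f 1%N * f l.
Proof.
move=> pl; have := @prod_split R f 1 l pl; rewrite mul1n dvdn1 divisors1 !big_seq1 muln1.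
by move=> -> //; rewrite neq_ltn prime_gt1 ?orbT.
Qed.

Lemma prod_div2 (R : comNzRingType) (f : nat -> R) l1 l2 : prime l1 -> prime l2 -> l1 != l2 ->
  \prod_(d <- divisors (l1 * l2)) f d = f 1%N * f l1 * (f l2 * f (l2 * l1)%N).
Proof.
move=> p1 p2 ne; rewrite prod_split // ?prime_gt0 // ?dvdn_prime2 // 1?eq_sym //.
by rewrite !prod_div1 // muln1.
Qed.

Lemma prod_div3 (R : comNzRingType) (f : nat -> R) p q r : prime p -> prime q -> prime r ->
  p != q -> q != r -> p != r ->
  \prod_(d <- divisors (p * q * r)) f d =
  (f 1%N * f p * (f q * f (q * p)%N)) * (f r * f (r * p)%N * (f (r * q)%N * f (r * (q * p))%N)).
Proof.
move=> pp pq pr npq nqr npr; rewrite prod_split ?muln_gt0 ?prime_gt0 //; last first.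
  by rewrite Euclid_dvdM // !dvdn_prime2 // negb_or eq_sym npr eq_sym nqr.
rewrite !prod_div2 //; congr (_ * _).
by rewrite muln1 !mulnA.
Qed.

Lemma AC8 (R : comNzRingType) (a1 ap aq ar apq aqr arp am : R) :
 am * (a1 * (a1 * ap * (aq * apq)) * (a1 * aq * (ar * aqr)) * (a1 * ar * (ap * arp))) =
 (a1 * ap * (aq * apq) * (ar * arp * (aqr * am))) * (a1 * ap) * (a1 * aq) * (a1 * ar).
Proof.
rewrite !mulrA.
by rewrite [LHS](ACl (2*4*5*6*9*14*10*1*3*13*7*8*11*12)).
Qed.

Lemma Phi_identity p q r : prime p -> prime q -> prime r ->
  p != q -> q != r -> p != r ->
  'Phi_(p * q * r) * (('X - 1) * ('X^(p * q) - 1) * ('X^(q * r) - 1) * ('X^(r * p) - 1))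
  = ('X^(p * q * r) - 1) * ('X^p - 1) * ('X^q - 1) * ('X^r - 1).
Proof.
move=> pp pq pr npq nqr npr.
have P1 : 'X - 1 = 'Phi_1 :> {poly int}.
  by rewrite -(@prod_Cyclotomic 1) // divisors1 big_seq1.
have Pp l : prime l -> 'X^l - 1 = 'Phi_1 * 'Phi_l :> {poly int}.
  by move=> pl; rewrite -prod_Cyclotomic ?prime_gt0 // prod_div1.
have Pll l1 l2 : prime l1 -> prime l2 -> l1 != l2 ->
   'X^(l1 * l2) - 1 = 'Phi_1 * 'Phi_l1 * ('Phi_l2 * 'Phi_(l2 * l1)) :> {poly int}.
  by move=> p1 p2 ne; rewrite -prod_Cyclotomic ?muln_gt0 ?prime_gt0 // prod_div2.
have Pm : 'X^(p * q * r) - 1 = \prod_(d <- divisors (p * q * r)) 'Phi_d :> {poly int}.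
  by rewrite prod_Cyclotomic // !muln_gt0 !prime_gt0.
rewrite Pm prod_div3 //.
rewrite (Pp p) // (Pp q) // (Pp r) // P1 (Pll p q) // (Pll q r) // (Pll r p) 1?eq_sym //.
rewrite (mulnC p r) (_ : (p * q * r = r * (q * p))%N); last by rewrite mulnC (mulnC p q).
exact: AC8.
Qed.
Definition St p q r (t : 'I_p * 'I_q * 'I_r) : nat :=
  (t.1.1 * (q * r) + t.1.2 * (r * p) + t.2 * (p * q))%N.
Definition Epoly p q r : {poly int} := \sum_(t : 'I_p * 'I_q * 'I_r) 'X^(St t).

Lemma geom (R : comNzRingType) (y : R) n : (\sum_(i < n) y ^+ i) * (y - 1) = y ^+ n - 1.
Proof. by rewrite subrX1 mulrC. Qed.

Lemma Epoly_fact p q r : Epoly p q r =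
  (\sum_(a < p) ('X^(q * r))^+a) * (\sum_(b < q) ('X^(r * p))^+b) * (\sum_(c < r) ('X^(p * q))^+c).
Proof.
rewrite -mulrA [X in _ * X]big_distrlr big_distrlr /=.
under eq_bigr do under eq_bigr do rewrite mulr_sumr.
rewrite pair_big /= pair_big /=; apply: eq_bigr => [[[a b] c]] _ /=.
by rewrite /St -!exprM mulrA -!exprD (mulnC (q * r)) (mulnC (r * p)) (mulnC (p * q)).
Qed.

Lemma coefE p q r (j : nat) : (Epoly p q r)`_j = \sum_(t : 'I_p * 'I_q * 'I_r) ((St t == j)%:R).
Proof.
rewrite /Epoly coef_sum; apply: eq_bigr => t _; by rewrite coefXn eq_sym.
Qed.

Definition ez (P : {poly int}) (j : int) : int := if (0 <= j) then P`_`|j| else 0.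

Lemma ez_nat P (j : nat) : ez P j%:Z = P`_j.
Proof. by []. Qed.

Lemma ez_neg P (j : int) : j < 0 -> ez P j = 0.
Proof. by rewrite /ez ltNge => /negbTE ->. Qed.

Lemma ez_add P Q j : ez (P + Q) j = ez P j + ez Q j.
Proof. by rewrite /ez; case: ifP; rewrite ?coefD ?addr0. Qed.

Lemma ez_opp P j : ez (- P) j = - ez P j.
Proof. by rewrite /ez; case: ifP; rewrite ?coefN ?oppr0. Qed.

Lemma ez_sub P Q j : ez (P - Q) j = ez P j - ez Q j.
Proof. by rewrite ez_add ez_opp. Qed.

Lemma ez_XnM P (s : nat) (j : int) : ez ('X^s * P) j = ez P (j - s%:Z).
Proof.
case: (ltrP j 0) => hj.
  by rewrite !ez_neg // subr_lt0 (lt_le_trans hj).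
case: j hj => // j _.
rewrite ez_nat coefXnM; case: ltnP => hs.
  by rewrite ez_neg // subr_lt0 ltz_nat.
by rewrite subzn // ez_nat.
Qed.

Lemma coef_mulXm1 (P : {poly int}) m n : (n < m)%N -> (P * ('X^m - 1))`_n = - P`_n.
Proof. by move=> h; rewrite mulrBr mulr1 coefB coefMXn h sub0r. Qed.

Lemma AC_C (R : comNzRingType) (g x1 xq xr ua ub uc xpq xqr xrp : R) :
  (g * (xq * xr) * (ua * ub * uc)) * (x1 * xpq * xqr * xrp) =
  (g * x1) * xq * xr * (ua * xqr) * (ub * xrp) * (uc * xpq).
Proof.
rewrite !mulrA.
by rewrite [LHS](ACl (1*7*2*3*4*9*5*10*6*8)).
Qed.

Lemma AC_D (R : comNzRingType) (xm xp xq xr : R) :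
  xp * xq * xr * xm * xm * xm = xm * xp * xq * xr * (xm * xm).
Proof.
rewrite !mulrA.
by rewrite [LHS](ACl (4*1*2*3*5*6)).
Qed.

Lemma C_identity p q r : prime p -> prime q -> prime r ->
  p != q -> q != r -> p != r ->
  (\sum_(i < p) 'X^i) * (('X^q - 1) * ('X^r - 1)) * Epoly p q r =
  'Phi_(p * q * r) * (('X^(p * q * r) - 1) * ('X^(p * q * r) - 1)).
Proof.
move=> pp pq pr npq nqr npr.
set B : {poly int} := ('X - 1) * ('X^(p * q) - 1) * ('X^(q * r) - 1) * ('X^(r * p) - 1).
have Bn0 : B != 0.
  apply: monic_neq0; rewrite /B !monicMl ?monicXnsubC ?muln_gt0 ?prime_gt0 //.
  by rewrite -(expr1 'X) monicXnsubC.
apply: (mulIf Bn0).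
rewrite [RHS]mulrAC /B Phi_identity // Epoly_fact AC_C !geom.
rewrite -!exprM.
have e1 : (q * r * p = p * q * r)%N by rewrite mulnC mulnA.
have e2 : (r * p * q = p * q * r)%N by rewrite (mulnC r p) mulnAC.
by rewrite e1 e2 AC_D.
Qed.

Lemma acoef_formula p q r n : prime p -> prime q -> prime r ->
  p != q -> q != r -> p != r -> (n < p * q * r)%N ->
  acoef (p * q * r) n = \sum_(i < p)
    (let j := n%:Z - i%:Z in
     ez (Epoly p q r) (j - q%:Z - r%:Z) - ez (Epoly p q r) (j - r%:Z)
     - (ez (Epoly p q r) (j - q%:Z) - ez (Epoly p q r) j)).
Proof.
move=> pp pq pr npq nqr npr hn.
have -> : acoef (p * q * r) n = ('Phi_(p * q * r) * (('X^(p * q * r) - 1) * ('X^(p * q * r) - 1)))`_n.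
  by rewrite mulrA coef_mulXm1 // coef_mulXm1 // opprK.
rewrite -C_identity // -mulrA mulr_suml coef_sum; apply: eq_bigr => i _ /=.
rewrite -ez_nat ez_XnM.
have -> : ('X^q - 1) * ('X^r - 1) * Epoly p q r =
   'X^q * ('X^r * Epoly p q r) - 'X^r * Epoly p q r - ('X^q * Epoly p q r - Epoly p q r).
  by rewrite mulrBr mulr1 !mulrBl !mul1r !mulrA.
by rewrite !(ez_add, ez_opp) !ez_XnM.
Qed.

Lemma cancelz l (x y M : nat) : prime l -> ~~ (l %| M)%N -> (x < l)%N -> (y < l)%N ->
  (l%:Z %| (x%:Z - y%:Z) * M%:Z)%Z -> x = y.
Proof.
move=> pl nM xl yl; rewrite dvdzE abszM /= Euclid_dvdM // (negbTE nM) orbF => H.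
apply/eqP; rewrite -distn_eq0; apply/eqP.
have hlt : (`|x%:Z - y%:Z| < l)%N.
  case: (leqP x y) => hxy; first by rewrite distnEr //; exact: leq_ltn_trans (leq_subr _ _) yl.
  by rewrite (distnEl (ltnW hxy)); exact: leq_ltn_trans (leq_subr _ _) xl.
case: (posnP `|x%:Z - y%:Z|) => // h0.
by have := dvdn_leq h0 H; rewrite leqNgt hlt.
Qed.

Lemma same_comp l (k1 k2 : int) (x y M : nat) : prime l -> ~~ (l %| M)%N -> (x < l)%N -> (y < l)%N ->
  (l%:Z %| k1 - (x * M)%:Z)%Z -> (l%:Z %| k2 - (y * M)%:Z)%Z -> (l%:Z %| k1 - k2)%Z -> x = y.
Proof.
move=> pl nM xl yl h1 h2 h12; apply: (cancelz pl nM xl yl).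
rewrite mulrBl -!PoszM.
have -> : (x * M)%:Z - (y * M)%:Z = ((k1 - k2) + (k2 - (y * M)%:Z)) - (k1 - (x * M)%:Z).
  by rewrite (subrKA k2) opprB [in RHS]addrC (subrKA k1).
by apply: rpredB => //; apply: rpredD.
Qed.

Lemma comp_dvd d (k : int) (X Y : nat) : (d%:Z %| k - (X + Y)%:Z)%Z -> (d %| Y)%N -> (d%:Z %| k - X%:Z)%Z.
Proof.
move=> h1 h2; have -> : k - X%:Z = (k - (X + Y)%:Z) + Y%:Z by rewrite PoszD opprD addrA subrK.
by apply: rpredD.
Qed.

Section Comp.
Variables (p q r : nat) (k : int) (t : 'I_p * 'I_q * 'I_r).
Hypothesis hk : ((p * q * r)%:Z %| k - (St t)%:Z)%Z.

Lemma comp_a : (p%:Z %| k - (t.1.1 * (q * r))%:Z)%Z.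
Proof.
apply: (@comp_dvd _ _ _ (t.1.2 * (r * p) + t.2 * (p * q))).
  have -> : (t.1.1 * (q * r) + (t.1.2 * (r * p) + t.2 * (p * q)) = St t)%N.
    by rewrite /St addnA.
  apply: (dvdz_trans _ hk); rewrite dvdzE /= -mulnA; exact: dvdn_mulr.
by apply: dvdn_add; apply: dvdn_mull; first [exact: dvdn_mull (dvdnn _) | exact: dvdn_mulr (dvdnn _)].
Qed.

Lemma comp_b : (q%:Z %| k - (t.1.2 * (r * p))%:Z)%Z.
Proof.
apply: (@comp_dvd _ _ _ (t.1.1 * (q * r) + t.2 * (p * q))).
  have -> : (t.1.2 * (r * p) + (t.1.1 * (q * r) + t.2 * (p * q)) = St t)%N.
    by rewrite /St addnAC addnC.
  apply: (dvdz_trans _ hk); rewrite dvdzE /= (mulnC p q) -mulnA; exact: dvdn_mulr.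
by apply: dvdn_add; apply: dvdn_mull; first [exact: dvdn_mull (dvdnn _) | exact: dvdn_mulr (dvdnn _)].
Qed.

Lemma comp_c : (r%:Z %| k - (t.2 * (p * q))%:Z)%Z.
Proof.
apply: (@comp_dvd _ _ _ (t.1.1 * (q * r) + t.1.2 * (r * p))).
  have -> : (t.2 * (p * q) + (t.1.1 * (q * r) + t.1.2 * (r * p)) = St t)%N.
    by rewrite /St addnC.
  apply: (dvdz_trans _ hk); rewrite dvdzE /=; exact: dvdn_mull.
by apply: dvdn_add; apply: dvdn_mull; first [exact: dvdn_mull (dvdnn _) | exact: dvdn_mulr (dvdnn _)].
Qed.
End Comp.

Lemma ndvd_prod l x y : prime l -> prime x -> prime y -> l != x -> l != y -> ~~ (l %| x * y)%N.
Proof.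
move=> pl px py nx ny; rewrite Euclid_dvdM // !dvdn_prime2 //.
by rewrite negb_or nx ny.
Qed.

Lemma St_inj p q r : prime p -> prime q -> prime r -> p != q -> q != r -> p != r ->
  forall t t' : 'I_p * 'I_q * 'I_r,
  ((p * q * r)%:Z %| (St t)%:Z - (St t')%:Z)%Z -> t = t'.
Proof.
move=> pp pq pr npq nqr npr t t' hk.
have h0 : ((p * q * r)%:Z %| (St t)%:Z - (St t)%:Z)%Z by rewrite subrr dvdz0.
have h00 : forall l : nat, (l%:Z %| (St t)%:Z - (St t)%:Z)%Z by move=> l; rewrite subrr dvdz0.
have ea : (t.1.1 : nat) = t'.1.1.
  apply: (same_comp pp _ (ltn_ord _) (ltn_ord _) (comp_a h0) (comp_a hk) (h00 p)).
  by apply: ndvd_prod.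
have eb : (t.1.2 : nat) = t'.1.2.
  apply: (same_comp pq _ (ltn_ord _) (ltn_ord _) (comp_b h0) (comp_b hk) (h00 q)).
  by apply: ndvd_prod; rewrite // eq_sym.
have ec : (t.2 : nat) = t'.2.
  apply: (same_comp pr _ (ltn_ord _) (ltn_ord _) (comp_c h0) (comp_c hk) (h00 r)).
  by apply: ndvd_prod; rewrite // eq_sym.
move: t t' ea eb ec {hk h0 h00} => [[a b] c] [[a' b'] c'] /= ea eb ec.
by rewrite (val_inj ea) (val_inj eb) (val_inj ec).
Qed.

Lemma abc_spec p q r (k : int) : prime p -> prime q -> prime r -> p != q -> q != r -> p != r ->
  exists t : 'I_p * 'I_q * 'I_r,
    abc p q r k = (nat_of_ord t.1.1, nat_of_ord t.1.2, nat_of_ord t.2) /\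
    ((p * q * r)%:Z %| k - (St t)%:Z)%Z.
Proof.
move=> pp pq pr npq nqr npr.
have m0 : (0 < p * q * r)%N by rewrite !muln_gt0 !prime_gt0.
rewrite /abc; case: pickP => [t Ht | Hn].
  by exists t; split => //; rewrite -eqz_mod_dvd.
exfalso.
pose f (t : 'I_p * 'I_q * 'I_r) : 'I_(p * q * r) := Ordinal (ltn_pmod (St t) m0).
have finj : injective f.
  move=> t t' /(congr1 val) /= e.
  apply: (St_inj pp pq pr npq nqr npr); rewrite -eqz_mod_dvd !modz_nat.
  by rewrite e.
have kge : (0 <= (k %% (p * q * r)%:Z)%Z) by rewrite modz_ge0 // eqz_nat -lt0n.
have klt : (`|(k %% (p * q * r)%:Z)%Z| < p * q * r)%N.
  by rewrite -ltz_nat gez0_abs // ltz_pmod // ltz_nat.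
have hcard : (#|'I_(p * q * r)| <= #|{: 'I_p * 'I_q * 'I_r}|)%N.
  by rewrite !card_prod !card_ord.
have := inj_card_onto finj hcard (Ordinal klt).
case/codomP => t /(congr1 val) /= e.
have := Hn t; rewrite /= => /negbT/negP; apply.
rewrite -[(k %% _)%Z]gez0_abs // e -modz_nat.
exact: eqxx.
Qed.

Definition Sabc p q r (k : int) : nat :=
  let t := abc p q r k in (t.1.1 * (q * r) + t.1.2 * (r * p) + t.2 * (p * q))%N.
Definition zf p q r (k : int) : int := (((Sabc p q r k)%:Z - k) %/ (p * q * r)%:Z)%Z.

Lemma frac_scale (x d e : nat) : e != 0%N -> ((x * e)%:R / (d * e)%:R : rat) = x%:R / d%:R.
Proof. by move=> e0; rewrite !natrM -mulf_div divff ?mulr1 // pnatr_eq0. Qed.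

Lemma intr_nat (n : nat) : (n%:Z)%:~R = n%:R :> rat.
Proof. by []. Qed.

Lemma zf_mul p q r (k : int) : prime p -> prime q -> prime r -> p != q -> q != r -> p != r ->
  zf p q r k * (p * q * r)%:Z = (Sabc p q r k)%:Z - k.
Proof.
move=> pp pq pr npq nqr npr; have [t [ht hk]] := abc_spec k pp pq pr npq nqr npr.
rewrite /zf divzK // /Sabc ht /=.
by rewrite -opprB rpredN.
Qed.

Lemma Fk_zf p q r (k : int) : prime p -> prime q -> prime r -> p != q -> q != r -> p != r ->
  Fk p q r k = (zf p q r k)%:~R.
Proof.
move=> pp pq pr npq nqr npr.
have mR : ((p * q * r)%:R : rat) != 0 by rewrite pnatr_eq0 -lt0n !muln_gt0 !prime_gt0.
have -> : (zf p q r k)%:~R = ((zf p q r k) * (p * q * r)%:Z)%:~R / ((p * q * r)%:R : rat).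
  by rewrite intrM mulfK.
rewrite zf_mul // intrB mulrBl /Fk /Sabc.
case: (abc p q r k) => [[a b] c] /=; congr (_ - _).
rewrite intr_nat !natrD !mulrDl.
have e1 : (p * q * r = p * (q * r))%N by rewrite mulnA.
have e2 : (p * q * r = q * (r * p))%N by rewrite (mulnC r p) mulnA (mulnC q p).
have e3 : (p * q * r = r * (p * q))%N by rewrite mulnC.
have nz : forall x y : nat, prime x -> prime y -> (x * y != 0)%N.
  by move=> x y px py; rewrite -lt0n muln_gt0 !prime_gt0.
rewrite {1}e1 frac_scale ?nz //.
rewrite {1}e2 frac_scale ?nz //.
by rewrite e3 frac_scale ?nz.
Qed.

Lemma Sabc_St p q r (k : int) (t : 'I_p * 'I_q * 'I_r) :
  abc p q r k = (nat_of_ord t.1.1, nat_of_ord t.1.2, nat_of_ord t.2) -> Sabc p q r k = St t.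
Proof. by rewrite /Sabc => ->. Qed.

Lemma St_bound p q r (t : 'I_p * 'I_q * 'I_r) :
  (St t + (q * r + r * p + p * q) <= p * (q * r) + q * (r * p) + r * (p * q))%N.
Proof.
have h1 : (t.1.1 * (q * r) + q * r <= p * (q * r))%N by rewrite -mulSnr leq_mul2r ltn_ord orbT.
have h2 : (t.1.2 * (r * p) + r * p <= q * (r * p))%N by rewrite -mulSnr leq_mul2r ltn_ord orbT.
have h3 : (t.2 * (p * q) + p * q <= r * (p * q))%N by rewrite -mulSnr leq_mul2r ltn_ord orbT.
apply: leq_trans (leq_add (leq_add h1 h2) h3).
by rewrite /St addnACA (addnACA (t.1.1 * (q * r))%N).
Qed.

Lemma zf_range p q r (j : int) : prime p -> prime q -> prime r -> p != q -> q != r -> p != r ->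
  0 < j + (p + q + r)%N%:Z -> j < (p * q * r)%N%:Z -> 0 <= zf p q r j <= 2.
Proof.
move=> pp pq pr npq nqr npr hj1 hj2.
have [t [ht hk]] := abc_spec j pp pq pr npq nqr npr.
have m0 : (0 < (p * q * r)%N%:Z) by rewrite ltz_nat !muln_gt0 !prime_gt0.
have hd : ((p * q * r)%N%:Z %| (St t)%:Z - j)%Z by rewrite -opprB rpredN.
rewrite /zf (Sabc_St ht); apply/andP; split.
  have h : -1 < (((St t)%:Z - j) %/ (p * q * r)%:Z)%Z.
    rewrite ltz_divRL // mulN1r (ltrBDl _).2 (lt_le_trans _ (_ : 0 <= (St t)%:Z)) //.
    by rewrite ltrBlDr add0r.
  by rewrite -lezD1 in h.
rewrite -ltzD1 ltz_divLR //.
have hb := St_bound t.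
have hpqr : (p + q + r <= q * r + r * p + p * q)%N.
  have h1 : (p <= r * p)%N by rewrite leq_pmull ?prime_gt0.
  have h2 : (q <= p * q)%N by rewrite leq_pmull ?prime_gt0.
  have h3 : (r <= q * r)%N by rewrite leq_pmull ?prime_gt0.
  apply: leq_trans (leq_add (leq_add h1 h2) h3) _.
  by rewrite addnC addnA.
apply: (@lt_le_trans _ _ ((St t + (p + q + r))%N%:Z)).
  by rewrite PoszD ltrD2l -subr_gt0 opprK addrC.
change ((St t + (p + q + r))%N%:Z <= (3 * (p * q * r))%N%:Z).
rewrite lez_nat; apply: leq_trans (leq_add (leqnn _) hpqr) _.
apply: leq_trans hb _.
have e1 : (p * (q * r) = p * q * r)%N by rewrite mulnA.
have e2 : (q * (r * p) = p * q * r)%N by rewrite (mulnC r p) mulnA (mulnC q p).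
have e3 : (r * (p * q) = p * q * r)%N by rewrite mulnC.
by rewrite e1 e2 e3 !mulSn mul0n addn0 addnA.
Qed.

Lemma zf_eq0 p q r (j : int) (t : 'I_p * 'I_q * 'I_r) :
  prime p -> prime q -> prime r -> p != q -> q != r -> p != r ->
  abc p q r j = (nat_of_ord t.1.1, nat_of_ord t.1.2, nat_of_ord t.2) ->
  (zf p q r j == 0) = ((St t)%:Z == j).
Proof.
move=> pp pq pr npq nqr npr ht.
have m0 : ((p * q * r)%N%:Z != 0) by rewrite eqz_nat -lt0n !muln_gt0 !prime_gt0.
by rewrite -(mulIr_eq0 _ (mulIf m0)) zf_mul // (Sabc_St ht) subr_eq0.
Qed.

Lemma ez_zf p q r (j : int) : prime p -> prime q -> prime r -> p != q -> q != r -> p != r ->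
  ez (Epoly p q r) j = ((zf p q r j == 0) : nat)%:Z.
Proof.
move=> pp pq pr npq nqr npr.
have [t [ht hk]] := abc_spec j pp pq pr npq nqr npr.
rewrite (zf_eq0 _ _ _ _ _ _ ht) //.
case: (ltrP j 0) => hj.
  rewrite ez_neg //; case: eqP => // e; move: hj; rewrite -e.
  by rewrite ltNge (_ : 0 <= (St t)%:Z).
case: j hj hk {ht} => // jj _ hk.
rewrite ez_nat coefE (bigD1 t) //= big1 ?addr0.
  by rewrite eqz_nat; case: (St t == jj).
move=> t' nt; case: eqP => // e; case/eqP: nt.
apply: (St_inj pp pq pr npq nqr npr); rewrite e; exact: hk.
Qed.

Definition Dl (n p q r : nat) (f : int -> int) : int :=
  \sum_(i < p) (f (n%:Z - i%:Z) + f (n%:Z - i%:Z - q%:Z - r%:Z)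
                - f (n%:Z - i%:Z - q%:Z) - f (n%:Z - i%:Z - r%:Z)).

Lemma lin4 (a1 a2 a3 a4 b1 b2 b3 b4 : int) :
  (a1 + b1) + (a2 + b2) - (a3 + b3) - (a4 + b4) = (a1 + a2 - a3 - a4) + (b1 + b2 - b3 - b4).
Proof.
rewrite !opprD !addrA.
by rewrite [LHS](ACl (1*3*5*7*2*4*6*8)).
Qed.

Lemma Dl_add n p q r f g : Dl n p q r (fun j => f j + g j) = Dl n p q r f + Dl n p q r g.
Proof. by rewrite /Dl -big_split; apply: eq_bigr => i _; rewrite lin4. Qed.

Lemma Dl_opp n p q r f : Dl n p q r (fun j => - f j) = - Dl n p q r f.
Proof. by rewrite /Dl -sumrN; apply: eq_bigr => i _; rewrite !opprD !opprK. Qed.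

Lemma Dl_mulr n p q r f c : Dl n p q r (fun j => f j * c) = Dl n p q r f * c.
Proof. by rewrite /Dl mulr_suml; apply: eq_bigr => i _; rewrite !mulrBl !mulrDl. Qed.

Lemma lin_id (k a b : int) : k + (k - a - b) - (k - a) - (k - b) = 0.
Proof.
have e : k + (k - a - b) = (k - a) + (k - b).
  by rewrite !addrA [RHS](ACl (1*3*2*4)).
by rewrite -addrA -opprD e subrr.
Qed.

Lemma Dl_id n p q r : Dl n p q r (fun j => j) = 0.
Proof. by rewrite /Dl big1 // => i _; rewrite lin_id. Qed.


Definition Af p q r (j : int) : nat := (abc p q r j).1.1.
Definition Bf p q r (j : int) : nat := (abc p q r j).1.2.
Definition Cf p q r (j : int) : nat := (abc p q r j).2.

Lemma Dl_ext n p q r f g : (forall j, f j = g j) -> Dl n p q r f = Dl n p q r g.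
Proof. by move=> e; rewrite /Dl; apply: eq_bigr => i _; rewrite !e. Qed.

Lemma lin_cancel (x y : int) : x + y - x - y = 0.
Proof. by rewrite (addrC x y) addrK subrr. Qed.

Lemma lin_cancel2 (x y : int) : x + y - y - x = 0.
Proof. by rewrite addrK subrr. Qed.

Lemma sub_sub_cancel (x y c : int) : (x - c) - (y - c) = x - y.
Proof. by rewrite opprB (subrKA c). Qed.

Lemma sub_sub_swap (u a b : int) : (u - a) - (u - b) = b - a.
Proof. by rewrite opprB addrC (subrKA u). Qed.

Section Fix.
Variables (p q r : nat).
Hypotheses (pp : prime p) (pq : prime q) (pr : prime r)
  (npq : p != q) (nqr : q != r) (npr : p != r).

Lemma A_lt j : (Af p q r j < p)%N.
Proof. by have [t [ht _]] := abc_spec j pp pq pr npq nqr npr; rewrite /Af ht ltn_ord. Qed.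

Lemma B_shift j : Bf p q r (j - q%:Z) = Bf p q r j.
Proof.
have [t [ht hk]] := abc_spec j pp pq pr npq nqr npr.
have [t' [ht' hk']] := abc_spec (j - q%:Z) pp pq pr npq nqr npr.
rewrite /Bf ht ht' /=; symmetry.
apply: (same_comp pq _ (ltn_ord _) (ltn_ord _) (comp_b hk) (comp_b hk')).
  by apply: ndvd_prod; rewrite // eq_sym.
by rewrite subKr dvdzz.
Qed.

Lemma C_shift j : Cf p q r (j - r%:Z) = Cf p q r j.
Proof.
have [t [ht hk]] := abc_spec j pp pq pr npq nqr npr.
have [t' [ht' hk']] := abc_spec (j - r%:Z) pp pq pr npq nqr npr.
rewrite /Cf ht ht' /=; symmetry.
apply: (same_comp pr _ (ltn_ord _) (ltn_ord _) (comp_c hk) (comp_c hk')).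
  by apply: ndvd_prod; rewrite // eq_sym.
by rewrite subKr dvdzz.
Qed.

Lemma A_sum u : \sum_(i < p) (Af p q r (u - i%:Z))%:Z = \sum_(i < p) (i : nat)%:Z.
Proof.
pose f (i : 'I_p) : 'I_p := Ordinal (A_lt (u - i%:Z)).
have finj : injective f.
  move=> i i' /(congr1 val) /=; rewrite /Af => e.
  have [t [ht hk]] := abc_spec (u - i%:Z) pp pq pr npq nqr npr.
  have [t' [ht' hk']] := abc_spec (u - i'%:Z) pp pq pr npq nqr npr.
  move: e; rewrite ht ht' /= => e.
  have h1 := comp_a hk; have h2 := comp_a hk'; rewrite -e in h2.
  have h12 : (p%:Z %| (u - i%:Z) - (u - i'%:Z))%Z.
    rewrite -(sub_sub_cancel _ _ ((t.1.1 * (q * r))%N%:Z)).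
    by apply: rpredB.
  apply: val_inj; symmetry; apply: (@cancelz p i' i 1 pp _ (ltn_ord _) (ltn_ord _)).
    by rewrite dvdn1 neq_ltn (prime_gt1 pp) orbT.
  by move: h12; rewrite sub_sub_swap mulr1.
by rewrite [RHS](reindex_inj finj).
Qed.
End Fix.

Section Fix2.
Variables (p q r n : nat).
Hypotheses (pp : prime p) (pq : prime q) (pr : prime r)
  (npq : p != q) (nqr : q != r) (npr : p != r).

Lemma Dl_B : Dl n p q r (fun j => (Bf p q r j)%:Z) = 0.
Proof.
rewrite /Dl big1 // => i _.
rewrite (B_shift pp pq pr npq nqr npr) (addrAC _ (- q%:Z)).
by rewrite (B_shift pp pq pr npq nqr npr) lin_cancel.
Qed.

Lemma Dl_C : Dl n p q r (fun j => (Cf p q r j)%:Z) = 0.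
Proof.
rewrite /Dl big1 // => i _.
by rewrite !(C_shift pp pq pr npq nqr npr) lin_cancel2.
Qed.

Lemma Dl_A : Dl n p q r (fun j => (Af p q r j)%:Z) = 0.
Proof.
rewrite /Dl !sumrB big_split /=.
rewrite (A_sum pp pq pr npq nqr npr).
have e : forall s : int, \sum_(i < p) (Af p q r (n%:Z - i%:Z - s))%:Z = \sum_(i < p) (i : nat)%:Z.
  move=> s; under eq_bigr do rewrite (addrAC n%:Z).
  exact: (A_sum pp pq pr npq nqr npr).
rewrite !e.
have e2 : \sum_(i < p) (Af p q r (n%:Z - i%:Z - q%:Z - r%:Z))%:Z = \sum_(i < p) (i : nat)%:Z.
  under eq_bigr do rewrite -addrA -opprD.
  exact: e.
by rewrite e2 addrK subrr.
Qed.

Lemma Dl_zf : Dl n p q r (zf p q r) = 0.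
Proof.
have m0 : ((p * q * r)%N%:Z != 0) by rewrite eqz_nat -lt0n !muln_gt0 !prime_gt0.
apply: (mulIf m0); rewrite mul0r -Dl_mulr.
rewrite (@Dl_ext _ _ _ _ _ (fun j => (Af p q r j)%:Z * (q * r)%N%:Z + (Bf p q r j)%:Z * (r * p)%N%:Z
   + (Cf p q r j)%:Z * (p * q)%N%:Z + - j)).
  by rewrite !Dl_add !Dl_mulr Dl_A Dl_B Dl_C Dl_opp Dl_id !mul0r !addr0.
move=> j; rewrite zf_mul //.
Qed.
End Fix2.


Lemma int012 (w : int) : 0 <= w <= 2 -> [\/ w = 0, w = 1 | w = 2].
Proof.
case: w => // w /andP[_]; rewrite lez_nat.
by case: w => [|[|[|]]] //; [constructor 1 | constructor 2 | constructor 3].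
Qed.

Lemma comb (w1 w2 w3 w4 : int) : 0 <= w1 <= 2 -> 0 <= w2 <= 2 -> 0 <= w3 <= 2 -> 0 <= w4 <= 2 ->
  let N (d : nat) (a b : int) := ((a == d%:Z) + (b == d%:Z))%N in
  let e (a : int) := ((a == 0) : nat)%:Z in
  [/\ e w2 - e w4 - (e w3 - e w1) = (N 0 w1 w2)%:Z - (N 0 w3 w4)%:Z,
     (N 2 w1 w2)%:Z - (N 2 w3 w4)%:Z = (N 0 w1 w2)%:Z - (N 0 w3 w4)%:Z + (w1 + w2 - w3 - w4)
   & (N 1 w3 w4)%:Z - (N 1 w1 w2)%:Z = ((N 0 w1 w2)%:Z - (N 0 w3 w4)%:Z) + ((N 2 w1 w2)%:Z - (N 2 w3 w4)%:Z)].
Proof.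
move=> /int012 h1 /int012 h2 /int012 h3 /int012 h4 N e.
by case: h1 => ->; case: h2 => ->; case: h3 => ->; case: h4 => ->; split.
Qed.

Lemma intr_sum p (F : 'I_p -> int) : ((\sum_(i < p) F i)%:~R : rat) = \sum_(i < p) (F i)%:~R.
Proof. by rewrite (big_morph (fun x : int => (x%:~R : rat)) (@intrD _) (erefl _)). Qed.

Lemma Ncount_zf p q r d a b : prime p -> prime q -> prime r -> p != q -> q != r -> p != r ->
  Ncount d [:: Fk p q r a; Fk p q r b] = ((zf p q r a == d%:Z) + (zf p q r b == d%:Z))%N.
Proof.
move=> pp pq pr npq nqr npr.
by rewrite /Ncount /= !Fk_zf // -intr_nat !eqr_int addn0.
Qed.

Lemma j_range (n i s p q r : nat) : (i < p)%N -> (s <= q + r)%N -> (n < p * q * r)%N ->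
  0 < (n%:Z - i%:Z - s%:Z) + (p + q + r)%N%:Z /\ n%:Z - i%:Z - s%:Z < (p * q * r)%N%:Z.
Proof.
move=> hi hs hn; split.
  have -> : (n%:Z - i%:Z - s%:Z) + (p + q + r)%N%:Z = (n + (p + q + r))%N%:Z - (i + s)%N%:Z.
    by rewrite !PoszD opprD !addrA [LHS](ACl (1*4*5*6*2*3)).
  rewrite subr_gt0 ltz_nat; apply: leq_trans (leq_addl _ _).
  by rewrite -addnA -addSn leq_add.
apply: (@le_lt_trans _ _ n%:Z); last by rewrite ltz_nat.
by rewrite -addrA -opprD lerBlDr lerDl.
Qed.

Lemma half_double (x : rat) : 1 / 2 * (x + x) = x.
Proof.
rewrite -mulr2n -(mulr_natl x 2) mulrA div1r mulVf ?mul1r //.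
Qed.

Unset Implicit Arguments.

Theorem lemma5 (p q r n : nat) :
  prime p -> prime q -> prime r -> p != q -> q != r -> p != r ->
  (p < q)%N -> (p < r)%N -> (n < p * q * r)%N ->
  let F := Fk p q r in
  let k := fun i : nat => n%:Z - i%:Z in
  [/\ acoef (p * q * r) n =
        \sum_(i < p)
          ((Ncount 0 [:: F (k i); F (k i - q%:Z - r%:Z)])%:Z
           - (Ncount 0 [:: F (k i - q%:Z); F (k i - r%:Z)])%:Z),
      acoef (p * q * r) n =
        \sum_(i < p)
          ((Ncount 2 [:: F (k i); F (k i - q%:Z - r%:Z)])%:Z
           - (Ncount 2 [:: F (k i - q%:Z); F (k i - r%:Z)])%:Z)
    & (acoef (p * q * r) n)%:~R =
        (1 / 2 : rat) * \sum_(i < p)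
          ((Ncount 1 [:: F (k i - q%:Z); F (k i - r%:Z)])%:R
           - (Ncount 1 [:: F (k i); F (k i - q%:Z - r%:Z)])%:R)].
Proof.
move=> pp pq pr npq nqr npr hpq hpr hn F k.
rewrite /F /k.
have hrng : forall (i : 'I_p) (s : nat), (s <= q + r)%N -> 0 <= zf p q r (n%:Z - i%:Z - s%:Z) <= 2.
  move=> i s hs; have [h1 h2] := j_range (ltn_ord i) hs hn.
  exact: zf_range.
have hw1 (i : 'I_p) : 0 <= zf p q r (n%:Z - i%:Z) <= 2.
  by have := hrng i 0%N (leq0n _); rewrite subr0.
have hw2 (i : 'I_p) : 0 <= zf p q r (n%:Z - i%:Z - q%:Z - r%:Z) <= 2.
  by have := hrng i (q + r)%N (leqnn _); rewrite PoszD opprD addrA.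
have hw3 (i : 'I_p) : 0 <= zf p q r (n%:Z - i%:Z - q%:Z) <= 2 by exact: hrng i q (leq_addr r q).
have hw4 (i : 'I_p) : 0 <= zf p q r (n%:Z - i%:Z - r%:Z) <= 2 by exact: hrng i r (leq_addl q r).
have H0 : acoef (p * q * r) n = \sum_(i < p)
         ((Ncount 0 [:: Fk p q r (n%:Z - i%:Z); Fk p q r (n%:Z - i%:Z - q%:Z - r%:Z)])%:Z -
          (Ncount 0 [:: Fk p q r (n%:Z - i%:Z - q%:Z); Fk p q r (n%:Z - i%:Z - r%:Z)])%:Z).
  rewrite acoef_formula //; apply: eq_bigr => i _; rewrite !Ncount_zf // /=.
  rewrite !ez_zf //.
  by have /= [-> _ _] := comb (hw1 i) (hw2 i) (hw3 i) (hw4 i).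
have H2 : acoef (p * q * r) n = \sum_(i < p)
         ((Ncount 2 [:: Fk p q r (n%:Z - i%:Z); Fk p q r (n%:Z - i%:Z - q%:Z - r%:Z)])%:Z -
          (Ncount 2 [:: Fk p q r (n%:Z - i%:Z - q%:Z); Fk p q r (n%:Z - i%:Z - r%:Z)])%:Z).
  have hz := Dl_zf n pp pq pr npq nqr npr; rewrite /Dl in hz.
  rewrite H0; apply/eqP; rewrite eq_sym -subr_eq0 -sumrB; apply/eqP.
  rewrite -[X in _ = X]hz; apply: eq_bigr => i _.
  rewrite !Ncount_zf //.
  have /= [_ -> _] := comb (hw1 i) (hw2 i) (hw3 i) (hw4 i).
  by rewrite addrC addKr.
split => //.
rewrite (eq_bigr (fun i : 'I_p => ((
     (Ncount 1 [:: Fk p q r (n%:Z - i%:Z - q%:Z); Fk p q r (n%:Z - i%:Z - r%:Z)])%:Z -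
     (Ncount 1 [:: Fk p q r (n%:Z - i%:Z); Fk p q r (n%:Z - i%:Z - q%:Z - r%:Z)])%:Z)%:~R : rat))); last first.
  by move=> i _; rewrite intrB.
rewrite -intr_sum.
have -> : \sum_(i < p)
     ((Ncount 1 [:: Fk p q r (n%:Z - i%:Z - q%:Z); Fk p q r (n%:Z - i%:Z - r%:Z)])%:Z -
      (Ncount 1 [:: Fk p q r (n%:Z - i%:Z); Fk p q r (n%:Z - i%:Z - q%:Z - r%:Z)])%:Z)
     = acoef (p * q * r) n + acoef (p * q * r) n.
  rewrite {1}H0 {1}H2 -big_split; apply: eq_bigr => i _.
  rewrite !Ncount_zf //.
  by have /= [_ _ ->] := comb (hw1 i) (hw2 i) (hw3 i) (hw4 i).
by rewrite intrD half_double.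
Qed.
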